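(* Let $*$ be a rank-one preserving product on $M_{n\times m}(\mathbb{C})$. Then $*$ is a generalized Schur product: there exist a unital associative complex algebra $\mathcal{A}$ of dimension $n$, a unital associative complex algebra $\mathcal{B}$ of dimension $m$, and linear bijections $v_{\mathcal{A}}:\mathcal{A}\to\mathbb{C}^n$, $v_{\mathcal{B}}:\mathcal{B}\to\mathbb{C}^m$ such that for all $a,c\in\mathcal{A}$ and $b,d\in\mathcal{B}$, $$ v_{\mathcal{A}}(a)v_{\mathcal{B}}(b)^* * v_{\mathcal{A}}(c)v_{\mathcal{B}}(d)^* = v_{\mathcal{A}}(ac)\,v_{\mathcal{B}}(bd)^*. $$ (In fact one may take $\mathcal{A}=\mathbb{C}^n$, $\mathcal{B}=\mathbb{C}^m$ with suitable products and $v_{\mathcal{A}},v_{\mathcal{B}}$ the identity maps.)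
   Context: A rank-one preserving product (ropp) on $M_{n\times m}(\mathbb{C})$ is an associative bilinear product $*$ on $M_{n\times m}(\mathbb{C})$ which has an identity element of rank one and such that the $*$-product of any two rank-one matrices has rank at most one. Given unital algebras $\mathcal{A}$ (dimension $n$), $\mathcal{B}$ (dimension $m$) and linear bijections $v_{\mathcal{A}}:\mathcal{A}\to\mathbb{C}^n$, $v_{\mathcal{B}}:\mathcal{B}\to\mathbb{C}^m$, the generalized Schur product is the unique bilinear product on $M_{n\times m}(\mathbb{C})$ satisfying $v_{\mathcal{A}}(a)v_{\mathcal{B}}(b)^* * v_{\mathcal{A}}(c)v_{\mathcal{B}}(d)^* = v_{\mathcal{A}}(ac)v_{\mathcal{B}}(bd)^*$; here $u^*$ is the conjugate transpose of a column vector $u$. *)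

(* Defs.v *)
From HB Require Import structures.
From mathcomp Require Import all_boot all_order all_algebra all_field.
Set Implicit Arguments. Unset Strict Implicit. Unset Printing Implicit Defensive.
Import GRing.Theory Num.Theory.
Local Open Scope ring_scope.

Definition cadj (C : numClosedFieldType) (k : nat) (u : 'cV[C]_k) : 'rV[C]_k :=
  (map_mx Num.conj_op u)^T.

Definition ropp (C : numClosedFieldType) (n m : nat)
    (mul : 'M[C]_(n, m) -> 'M[C]_(n, m) -> 'M[C]_(n, m)) : Prop :=
  (forall (k : C) (A B D : 'M[C]_(n, m)), mul (k *: A + B) D = k *: mul A D + mul B D) /\
  (forall (k : C) (A B D : 'M[C]_(n, m)), mul D (k *: A + B) = k *: mul D A + mul D B) /\
  (forall A B D : 'M[C]_(n, m), mul A (mul B D) = mul (mul A B) D) /\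
  (exists E : 'M[C]_(n, m), \rank E = 1%N /\
       forall A, mul E A = A /\ mul A E = A) /\
  (forall A B : 'M[C]_(n, m), \rank A = 1%N -> \rank B = 1%N ->
       (\rank (mul A B) <= 1)%N).

Definition gen_schur (C : numClosedFieldType) (n m : nat)
    (mul : 'M[C]_(n, m) -> 'M[C]_(n, m) -> 'M[C]_(n, m)) : Prop :=
  exists (A : falgType C) (B : falgType C),
    (\dim {: A} = n)%N /\ (\dim {: B} = m)%N /\
    exists (vA : {linear A -> 'cV[C]_n}) (vB : {linear B -> 'cV[C]_m}),
      bijective vA /\ bijective vB /\
      forall (a c : A) (b d : B),
        mul (vA a *m cadj (vB b)) (vA c *m cadj (vB d))
        = vA (a * c) *m cadj (vB (b * d)).

(* Main.v *)
Require Import Defs.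
From HB Require Import structures.
From mathcomp Require Import all_boot all_order all_algebra all_field.
From Stdlib Require Import Classical.
Set Implicit Arguments. Unset Strict Implicit. Unset Printing Implicit Defensive.
Import GRing.Theory Num.Theory.
Local Open Scope ring_scope.

Section Rank.
Variable F : fieldType.

Lemma rank_le1P n m (A : 'M[F]_(n, m)) : (\rank A <= 1)%N ->
  exists (u : 'cV[F]_n) (w : 'rV[F]_m), A = u *m w.
Proof.
move=> hr.
have [A0|An0] := eqVneq A 0.
  by exists 0, 0; rewrite mul0mx A0.
have hr1 : \rank A = 1%N.
  apply/eqP; rewrite eqn_leq hr lt0n mxrank_eq0 An0 //.
move: (mulmx_base A); move: (col_base A) (row_base A); rewrite hr1 => P Q <-.
by exists P, Q.
Qed.

Lemma rank_tens n m (u : 'cV[F]_n) (w : 'rV[F]_m) : (\rank (u *m w) <= 1)%N.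
Proof. exact: leq_trans (mxrankM_maxl _ _) (rank_leq_col _). Qed.

Lemma rank_colC m (a b : 'rV[F]_m) : \rank (col_mx a b) = \rank (col_mx b a).
Proof. by rewrite -!addsmxE addsmxC. Qed.

Lemma dep2 m (a b : 'rV[F]_m) : (\rank (col_mx a b) <= 1)%N -> b != 0 ->
  exists c, a = c *: b.
Proof.
move=> hr bn0.
have hb : (b <= col_mx a b)%MS by rewrite -addsmxE addsmxSr.
have rb : \rank b = 1%N.
  by apply/eqP; rewrite eqn_leq rank_leq_row lt0n mxrank_eq0 bn0.
have := mxrank_leqif_sup hb.
move=> [_ ]; rewrite rb.
have -> : (1 == \rank (col_mx a b))%N.
  by rewrite eqn_leq hr (leq_trans _ (mxrankS hb)) // rb.
move=> /esym; rewrite col_mx_sub => /andP [/submxP [D ->] _].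
by exists (D 0 0); rewrite {1}[D]mx11_scalar mul_scalar_mx.
Qed.

Lemma rank_rowC n (u x : 'cV[F]_n) : \rank (row_mx u x) = \rank (row_mx x u).
Proof. by rewrite -mxrank_tr tr_row_mx rank_colC -tr_row_mx mxrank_tr. Qed.

Lemma dep2c n (u x : 'cV[F]_n) : (\rank (row_mx u x) <= 1)%N -> x != 0 ->
  exists c, u = c *: x.
Proof.
move=> hr xn0.
have h1 : (\rank (col_mx u^T x^T) <= 1)%N by rewrite -tr_row_mx mxrank_tr.
have h2 : x^T != 0 by apply: contraNneq xn0 => h; rewrite -[x]trmxK h linear0.
have [c hc] := dep2 h1 h2.
by exists c; apply: trmx_inj; rewrite hc linearZ.
Qed.

Lemma sumR n m (u x : 'cV[F]_n) (v f : 'rV[F]_m) :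
  (\rank (u *m v + x *m f)%R <= 1)%N ->
  (\rank (row_mx u x) <= 1)%N \/ (\rank (col_mx v f) <= 1)%N.
Proof.
move=> hr; apply: NNPP => /not_or_and [h1 h2].
have rf : row_free (col_mx v f).
  rewrite /row_free eqn_leq rank_leq_row /=.
  by rewrite ltnNge; apply/negP.
move: hr; rewrite -(mul_row_col u x v f) mxrankMfree //.
Qed.
Section C1.
Variables (n m : nat) (G : 'cV[F]_n -> 'cV[F]_n -> 'M[F]_(n, m)).
Variables (e : 'cV[F]_n) (f : 'rV[F]_m).
Hypothesis GL : forall a x y z, G (a *: x + y) z = a *: G x z + G y z.
Hypothesis GR : forall a x y z, G z (a *: x + y) = a *: G z x + G z y.
Hypothesis Grk : forall x y, (\rank (G x y) <= 1)%N.
Hypothesis Ge1 : forall x, G x e = x *m f.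
Hypothesis Ge2 : forall x, G e x = x *m f.
Hypothesis e0 : e != 0.
Hypothesis f0 : f != 0.

Lemma G0l z : G 0 z = 0.
Proof. have := GL 1 0 0 z; rewrite !scale1r addr0 => H. apply: (@GRing.addrI _ (G 0 z)). by rewrite addr0 -H. Qed.
Lemma G0r z : G z 0 = 0.
Proof. have := GR 1 0 0 z; rewrite !scale1r addr0 => H. apply: (@GRing.addrI _ (G z 0)). by rewrite addr0 -H. Qed.
Lemma GDl x y z : G (x + y) z = G x z + G y z.
Proof. by have := GL 1 x y z; rewrite !scale1r. Qed.
Lemma GDr x y z : G z (x + y) = G z x + G z y.
Proof. by have := GR 1 x y z; rewrite !scale1r. Qed.
Lemma GZl a x z : G (a *: x) z = a *: G x z.
Proof. by have := GL a x 0 z; rewrite !addr0 G0l addr0. Qed.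
Lemma GZr a x z : G z (a *: x) = a *: G z x.
Proof. by have := GR a x 0 z; rewrite !addr0 G0r addr0. Qed.

Lemma C1_gen x y : x != 0 -> ~ (exists c, y = c *: x) ->
  exists w, G x y = w *m f.
Proof.
move=> xn0 ny.
have [u [v huv]] := rank_le1P (Grk x y).
have h1 : (\rank (u *m v + x *m f)%R <= 1)%N by rewrite -huv -Ge1 -GDr.
have h2 : (\rank (u *m v + y *m f)%R <= 1)%N by rewrite -huv -Ge2 -GDl.
have [r1|r1] := sumR h1; last first.
  have [c hc] := dep2 r1 f0.
  by exists (c *: u); rewrite huv hc -scalemxAr scalemxAl.
have [r2|r2] := sumR h2; last first.
  have [c hc] := dep2 r2 f0.
  by exists (c *: u); rewrite huv hc -scalemxAr scalemxAl.
have [u0|un0] := eqVneq u 0.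
  by exists 0; rewrite huv u0 !mul0mx.
exfalso; apply: ny.
rewrite rank_rowC in r1; rewrite rank_rowC in r2.
have [a ha] := dep2c r1 un0.
have [b hb] := dep2c r2 un0.
have an0 : a != 0 by apply: contraNneq xn0 => a0; rewrite ha a0 scale0r.
exists (b / a); rewrite hb ha scalerA mulfVK //.
Qed.

Lemma C1 x y : exists w, G x y = w *m f.
Proof.
have [->|xn0] := eqVneq x 0.
  by exists 0; rewrite G0l mul0mx.
have [[c ->]|ny] := classic (exists c, y = c *: x); last exact: C1_gen.
suff [w hw] : exists w, G x x = w *m f.
  by exists (c *: w); rewrite GZr hw scalemxAl.
have [[z nz]|allz] := classic (exists z, ~ exists c, z = c *: x).
  have nz2 : ~ exists c, x + z = c *: x.
    move=> [d hd]; apply: nz; exists (d - 1).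
    by rewrite scalerBl scale1r -hd addrC addKr.
  have [w1 hw1] := C1_gen xn0 nz2.
  have [w2 hw2] := C1_gen xn0 nz.
  exists (w1 - w2).
  by rewrite mulmxBl -hw1 -hw2 GDr addrK.
have [d hd] : exists d, e = d *: x.
  by apply: NNPP => H; apply: allz; exists e.
have dn0 : d != 0 by apply: contraNneq e0 => d0; rewrite hd d0 scale0r.
have hx : x = d^-1 *: e by rewrite hd scalerA mulVf // scale1r.
exists (d^-1 *: (d^-1 *: e)).
by rewrite {1 2}hx GZl GZr Ge1 -!scalemxAl.
Qed.
End C1.
Lemma ACL (V : zmodType) (A B L : V) : L + B = (A + B) + (L - A).
Proof. by rewrite addrCA addrAC subrr add0r. Qed.

Lemma ACL2 (V : zmodType) (L B C D : V) : L + B + (C + D) = L + D + C + B.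
Proof. rewrite -!addrA; congr (_ + _). by rewrite addrC addrA [D + C]addrC. Qed.

Section CK.
Variables (n m : nat) (K : 'cV[F]_n -> 'rV[F]_m -> 'M[F]_(n, m)).
Variables (e : 'cV[F]_n) (f : 'rV[F]_m).
Hypothesis KL : forall a x y z, K (a *: x + y) z = a *: K x z + K y z.
Hypothesis KR : forall a x y z, K z (a *: x + y) = a *: K z x + K z y.
Hypothesis Krk : forall x y, (\rank (K x y) <= 1)%N.
Hypothesis Ke1 : forall w, K e w = e *m w.
Hypothesis Ke2 : forall x, K x f = x *m f.
Hypothesis e0 : e != 0.
Hypothesis f0 : f != 0.

Lemma K0l z : K 0 z = 0.
Proof. have := KL 1 0 0 z; rewrite !scale1r addr0 => H. apply: (@GRing.addrI _ (K 0 z)). by rewrite addr0 -H. Qed.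
Lemma K0r z : K z 0 = 0.
Proof. have := KR 1 0 0 z; rewrite !scale1r addr0 => H. apply: (@GRing.addrI _ (K z 0)). by rewrite addr0 -H. Qed.
Lemma KDl x y z : K (x + y) z = K x z + K y z.
Proof. by have := KL 1 x y z; rewrite !scale1r. Qed.
Lemma KDr x y z : K z (x + y) = K z x + K z y.
Proof. by have := KR 1 x y z; rewrite !scale1r. Qed.
Lemma KZl a x z : K (a *: x) z = a *: K x z.
Proof. by have := KL a x 0 z; rewrite !addr0 K0l addr0. Qed.
Lemma KZr a x z : K z (a *: x) = a *: K z x.
Proof. by have := KR a x 0 z; rewrite !addr0 K0r addr0. Qed.

Lemma CK x w : K x w = x *m w.
Proof.
have [[c ->]|nx] := classic (exists c, x = c *: e).
  by rewrite KZl Ke1 scalemxAl.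
have [[c ->]|nw] := classic (exists c, w = c *: f).
  by rewrite KZr Ke2 scalemxAr.
have xn0 : x != 0 by apply: contra_not_neq nx => ->; exists 0; rewrite scale0r.
have wn0 : w != 0 by apply: contra_not_neq nw => ->; exists 0; rewrite scale0r.
have h3 : (\rank (K (x + e) (w + f)) <= 1)%N by [].
rewrite KDl !KDr !Ke1 Ke2 in h3.
have [l [hl|hl]] : exists l, K x w = l *: (x *m w) \/ K x w = l *: (e *m f).
  have [u [v huv]] := rank_le1P (Krk x w).
  have h1 : (\rank (u *m v + e *m w)%R <= 1)%N by rewrite -huv -Ke1 -KDl.
  have h2 : (\rank (u *m v + x *m f)%R <= 1)%N by rewrite -huv -Ke2 -KDr.
  have [u0|un0] := eqVneq u 0.
    by exists 0; left; rewrite huv u0 mul0mx scale0r.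
  have [v0|vn0] := eqVneq v 0.
    by exists 0; left; rewrite huv v0 mulmx0 scale0r.
  have [r1|r1] := sumR h1; have [r2|r2] := sumR h2.
  + exfalso; apply: nx.
    rewrite rank_rowC in r1; rewrite rank_rowC in r2.
    have [a ha] := dep2c r1 un0; have [b hb] := dep2c r2 un0.
    have an0 : a != 0 by apply: contraNneq e0 => a0; rewrite ha a0 scale0r.
    by exists (b / a); rewrite hb ha scalerA divfK.
  + have [a ha] := dep2c r1 e0; have [b hb] := dep2 r2 f0.
    exists (a * b); right.
    by rewrite huv ha hb -scalemxAl -scalemxAr scalerA.
  + have [a ha] := dep2c r2 xn0; have [b hb] := dep2 r1 wn0.
    exists (a * b); left.
    by rewrite huv ha hb -scalemxAl -scalemxAr scalerA.
  + exfalso; apply: nw.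
    rewrite rank_colC in r1; rewrite rank_colC in r2.
    have [a ha] := dep2 r1 vn0; have [b hb] := dep2 r2 vn0.
    have bn0 : b != 0 by apply: contraNneq f0 => b0; rewrite hb b0 scale0r.
    by exists (a / b); rewrite hb ha scalerA divfK.
- rewrite hl in h3.
  have [l1|ln1] := eqVneq l 1; first by rewrite hl l1 scale1r.
  have h4 : (\rank ((x + e) *m (w + f) + ((l - 1) *: x) *m w)%R <= 1)%N.
    rewrite mulmxDl !mulmxDr -scalemxAl scalerBl scale1r.
    by rewrite -[X in X + (_ - _)]addrA -ACL addrA.
  have [r|r] := sumR h4; last first.
    exfalso; apply: nw.
    have [c hc] := dep2 r wn0.
    have hf : f = (c - 1) *: w by rewrite scalerBl scale1r -hc [w + f]addrC addrK.
    have cn0 : c - 1 != 0 by apply: contraNneq f0 => c0; rewrite hf c0 scale0r.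
    by exists (c - 1)^-1; rewrite hf scalerA mulVf // scale1r.
  have hx0 : (l - 1) *: x != 0.
    by rewrite scaler_eq0 negb_or subr_eq0 ln1.
  have [c hc] := dep2c r hx0.
  set d := c * (l - 1) - 1.
  have he : e = d *: x.
    by rewrite /d scalerBl scale1r -scalerA -hc addrC addKr.
  have dn0 : d != 0 by apply: contraNneq e0 => d0; rewrite he d0 scale0r.
  exfalso; apply: nx; exists d^-1.
  by rewrite he scalerA mulVf // scale1r.
- rewrite hl in h3.
  have h4 : (\rank (e *m ((l + 1) *: f + w) + x *m f)%R <= 1)%N.
    by rewrite mulmxDr -scalemxAr scalerDl scale1r -ACL2.
  exfalso.
  have [r|r] := sumR h4.
    rewrite rank_rowC in r.
    by have [c hc] := dep2c r e0; apply: nx; exists c.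
  have [c hc] := dep2 r f0.
  apply: nw; exists (c - (l + 1)).
  by rewrite scalerBl -hc addrC addKr.
Qed.
End CK.
End Rank.

Section Cadj.
Variable C : numClosedFieldType.
Lemma ccK k l (X : 'M[C]_(k, l)) : (map_mx Num.conj_op ((map_mx Num.conj_op X)^T))^T = X.
Proof.
rewrite -map_trmx trmxK -map_mx_comp map_mx_id // => i /=; exact: conjCK.
Qed.
Lemma cadjDZ k (a : C) (x y : 'cV[C]_k) : cadj (a *: x + y) = a^* *: cadj x + cadj y.
Proof. by rewrite /cadj map_mxD map_mxZ linearD linearZ. Qed.
Lemma cadj0 k : cadj (0 : 'cV[C]_k) = 0.
Proof. by apply/matrixP => i j; rewrite !mxE rmorph0. Qed.
Lemma cadjK k (x : 'cV[C]_k) : (map_mx Num.conj_op (cadj x))^T = x.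
Proof. exact: ccK. Qed.
Lemma cadj_inj k (x y : 'cV[C]_k) : cadj x = cadj y -> x = y.
Proof. by move=> h; rewrite -(cadjK x) h cadjK. Qed.
Lemma phi_ex k (g : 'rV[C]_k) : g != 0 -> exists phi : 'cV[C]_k, g *m phi = 1%:M.
Proof.
move=> g0.
have [j hj] : exists j, g 0 j != 0.
  apply: NNPP => H; suff h : g = 0 by rewrite h eqxx in g0.
  apply/matrixP => i j.
  rewrite ord1 mxE; case: (eqVneq (g 0 j) 0) => // hne; exfalso; apply: H; by exists j.
exists ((g 0 j)^-1 *: (delta_mx j 0 : 'cV[C]_k)).
rewrite -scalemxAr -colE; apply/matrixP => i k'; rewrite !ord1 !mxE eqxx /=.
by rewrite mulVf.
Qed.
End Cadj.

Section Build.
Variables (K : fieldType) (k : nat) (p : 'cV[K]_k -> 'cV[K]_k -> 'cV[K]_k) (u : 'cV[K]_k).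
Hypothesis pL : forall a x y z, p (a *: x + y) z = a *: p x z + p y z.
Hypothesis pR : forall a x y z, p z (a *: x + y) = a *: p z x + p z y.
Hypothesis pA : forall x y z, p x (p y z) = p (p x y) z.
Hypothesis p1l : forall x, p u x = x.
Hypothesis p1r : forall x, p x u = x.
Hypothesis u0 : u != 0.

Definition FA : Type := 'cV[K]_k.
HB.instance Definition _ := GRing.Lmodule.on FA.
HB.instance Definition _ := Vector.on FA.

Lemma pDl : left_distributive (p : FA -> FA -> FA) +%R.
Proof. move=> x y z. have := pL 1 x y z. rewrite !scale1r. exact. Qed.
Lemma pDr : right_distributive (p : FA -> FA -> FA) +%R.
Proof. move=> x y z. have := pR 1 y z x. rewrite !scale1r. exact. Qed.

HB.instance Definition _ := GRing.Zmodule_isNzRing.Build FA pA p1l p1r pDl pDr u0.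
Lemma p0l y : p 0 y = 0.
Proof. have := pL 1 0 0 y; rewrite !scale1r addr0 => H. apply: (@GRing.addrI _ (p 0 y)). by rewrite addr0 -H. Qed.
Lemma p0r y : p y 0 = 0.
Proof. have := pR 1 0 0 y; rewrite !scale1r addr0 => H. apply: (@GRing.addrI _ (p y 0)). by rewrite addr0 -H. Qed.
Lemma pZl (a : K) (x y : FA) : a *: (x * y) = (a *: x) * y.
Proof. by have := pL a x 0 y; rewrite addr0 p0l addr0. Qed.
Lemma pZr (a : K) (x y : FA) : a *: (x * y) = x * (a *: y).
Proof. by have := pR a y 0 x; rewrite addr0 p0r addr0. Qed.
HB.instance Definition _ := GRing.Lmodule_isLalgebra.Build K FA pZl.
HB.instance Definition _ := GRing.Lalgebra_isAlgebra.Build K FA pZr.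
HB.instance Definition _ := Algebra_isFalgebra.Build K FA.

Definition toCV (x : FA) : 'cV[K]_k := x.
Lemma toCV_lin : linear toCV. Proof. by []. Qed.
HB.instance Definition _ := GRing.isLinear.Build K FA 'cV[K]_k _ toCV toCV_lin.

Lemma dimFA : \dim {: FA} = k.
Proof. by rewrite dimvf /dim /= muln1. Qed.

Lemma FA_spec : exists (A : falgType K) (v : {linear A -> 'cV[K]_k}),
  bijective v /\ \dim {: A} = k /\ forall x y, v (x * y) = p (v x) (v y).
Proof.
exists FA, toCV; split; first by exists id.
by split; [exact: dimFA | ].
Qed.
End Build.

Section Main.
Variables (C : numClosedFieldType) (n m : nat).
Variable mul : 'M[C]_(n, m) -> 'M[C]_(n, m) -> 'M[C]_(n, m).
Hypothesis mL : forall (k : C) (A B D : 'M[C]_(n, m)), mul (k *: A + B) D = k *: mul A D + mul B D.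
Hypothesis mR : forall (k : C) (A B D : 'M[C]_(n, m)), mul D (k *: A + B) = k *: mul D A + mul D B.
Hypothesis mA : forall A B D : 'M[C]_(n, m), mul A (mul B D) = mul (mul A B) D.
Variables (e : 'cV[C]_n) (f : 'rV[C]_m).
Hypothesis mE1 : forall A, mul (e *m f) A = A.
Hypothesis mE2 : forall A, mul A (e *m f) = A.
Hypothesis mrk : forall A B : 'M[C]_(n, m), \rank A = 1%N -> \rank B = 1%N ->
       (\rank (mul A B) <= 1)%N.
Hypothesis e0 : e != 0.
Hypothesis f0 : f != 0.

Lemma m0l z : mul 0 z = 0.
Proof. have := mL 1 0 0 z; rewrite !scale1r addr0 => H. apply: (@GRing.addrI _ (mul 0 z)). by rewrite addr0 -H. Qed.
Lemma m0r z : mul z 0 = 0.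
Proof. have := mR 1 0 0 z; rewrite !scale1r addr0 => H. apply: (@GRing.addrI _ (mul z 0)). by rewrite addr0 -H. Qed.

Lemma mrk4 (x y : 'cV[C]_n) (w v : 'rV[C]_m) : (\rank (mul (x *m w) (y *m v)) <= 1)%N.
Proof.
have r1 := rank_tens x w; have r2 := rank_tens y v.
move: r1; rewrite leq_eqVlt ltnS leqn0 => /orP [/eqP h1|].
  move: r2; rewrite leq_eqVlt ltnS leqn0 => /orP [/eqP h2|].
    exact: mrk.
  by rewrite mxrank_eq0 => /eqP ->; rewrite m0r mxrank0.
by rewrite mxrank_eq0 => /eqP ->; rewrite m0l mxrank0.
Qed.

Lemma linl (a : C) (x y : 'cV[C]_n) (w : 'rV[C]_m) : (a *: x + y) *m w = a *: (x *m w) + y *m w.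
Proof. by rewrite mulmxDl scalemxAl. Qed.
Lemma linr (a : C) (x y : 'rV[C]_m) (w : 'cV[C]_n) : w *m (a *: x + y) = a *: (w *m x) + w *m y.
Proof. by rewrite mulmxDr scalemxAr. Qed.

Lemma keyK x w : mul (x *m f) (e *m w) = x *m w.
Proof.
apply: (@CK _ n m (fun x w => mul (x *m f) (e *m w)) e f).
- by move=> a x1 y1 z1; rewrite linl mL.
- by move=> a x1 y1 z1; rewrite linr mR.
- by move=> x1 y1; exact: mrk4.
- by move=> w1; rewrite mE1.
- by move=> x1; rewrite mE2.
- exact: e0.
- exact: f0.
Qed.

Lemma keyK' x w : mul (e *m w) (x *m f) = x *m w.
Proof.
apply: (@CK _ n m (fun x w => mul (e *m w) (x *m f)) e f).
- by move=> a x1 y1 z1; rewrite linl mR.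
- by move=> a x1 y1 z1; rewrite linr mL.
- by move=> x1 y1; exact: mrk4.
- by move=> w1; rewrite mE2.
- by move=> x1; rewrite mE1.
- exact: e0.
- exact: f0.
Qed.

Lemma keyA x y : exists w, mul (x *m f) (y *m f) = w *m f.
Proof.
apply: (@C1 _ n m (fun x y => mul (x *m f) (y *m f)) e f).
- by move=> a x1 y1 z1; rewrite linl mL.
- by move=> a x1 y1 z1; rewrite linl mR.
- by move=> x1 y1; exact: mrk4.
- by move=> x1; rewrite mE2.
- by move=> x1; rewrite mE1.
- exact: e0.
- exact: f0.
Qed.

Lemma keyB (a b : 'rV[C]_m) : exists w, mul (e *m a) (e *m b) = e *m w.
Proof.
have e0' : f^T != 0 by apply: contraNneq f0 => h; rewrite -[f]trmxK h linear0.
have f0' : e^T != 0 by apply: contraNneq e0 => h; rewrite -[e]trmxK h linear0.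
pose G := fun x y : 'cV[C]_m => (mul (e *m x^T) (e *m y^T))^T.
have h1 : forall k x1 y1 z1, G (k *: x1 + y1) z1 = k *: G x1 z1 + G y1 z1.
  by move=> k x1 y1 z1; rewrite /G linearD linearZ /= linr mL linearD linearZ.
have h2 : forall k x1 y1 z1, G z1 (k *: x1 + y1) = k *: G z1 x1 + G z1 y1.
  by move=> k x1 y1 z1; rewrite /G linearD linearZ /= linr mR linearD linearZ.
have h3 : forall x1 y1, (\rank (G x1 y1) <= 1)%N.
  by move=> x1 y1; rewrite /G mxrank_tr; exact: mrk4.
have h4 : forall x1, G x1 f^T = x1 *m e^T.
  by move=> x1; rewrite /G trmxK mE2 trmx_mul trmxK.
have h5 : forall x1, G f^T x1 = x1 *m e^T.
  by move=> x1; rewrite /G trmxK mE1 trmx_mul trmxK.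
have [w hw] := C1 h1 h2 h3 h4 h5 e0' f0' a^T b^T.
exists w^T; apply: trmx_inj; move: hw; rewrite /G !trmxK => ->.
by rewrite trmx_mul trmxK.
Qed.

Lemma main_sec : gen_schur mul.
Proof.
have [phi hphi] := phi_ex f0.
have [psi hpsi] : exists psi : 'rV[C]_n, psi *m e = 1%:M.
  have e0' : e^T != 0 by apply: contraNneq e0 => h; rewrite -[e]trmxK h linear0.
  have [p hp] := phi_ex e0'.
  by exists p^T; rewrite -[e]trmxK -trmx_mul hp tr_scalar_mx.
pose pA x y := mul (x *m f) (y *m f) *m phi.
have hA : forall x y, mul (x *m f) (y *m f) = pA x y *m f.
  by move=> x y; have [w hw] := keyA x y; rewrite /pA hw -[w *m f *m phi]mulmxA hphi mulmx1.
have injA : forall x y : 'cV[C]_n, x *m f = y *m f -> x = y.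
  move=> x y /(congr1 (mulmx^~ phi)); by rewrite -!mulmxA hphi !mulmx1.
pose pBr a b := psi *m mul (e *m a) (e *m b).
have hB : forall a b, mul (e *m a) (e *m b) = e *m pBr a b.
  by move=> a b; have [w hw] := keyB a b; rewrite /pBr hw [psi *m (e *m w)]mulmxA hpsi mul1mx.
have injB : forall x y : 'rV[C]_m, e *m x = e *m y -> x = y.
  move=> x y /(congr1 (mulmx psi)); by rewrite !mulmxA hpsi !mul1mx.
have pAL : forall a x y z, pA (a *: x + y) z = a *: pA x z + pA y z.
  by move=> a x y z; apply: injA; rewrite linl -!hA linl mL.
have pAR : forall a x y z, pA z (a *: x + y) = a *: pA z x + pA z y.
  by move=> a x y z; apply: injA; rewrite linl -!hA linl mR.
have pAA : forall x y z, pA x (pA y z) = pA (pA x y) z.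
  by move=> x y z; apply: injA; rewrite -!hA mA.
have pA1l : forall x, pA e x = x by move=> x; apply: injA; rewrite -hA mE1.
have pA1r : forall x, pA x e = x by move=> x; apply: injA; rewrite -hA mE2.
have [A [vA [bA [dA hvA]]]] := FA_spec pAL pAR pAA pA1l pA1r e0.
have pBL : forall a x y z, pBr (a *: x + y) z = a *: pBr x z + pBr y z.
  by move=> a x y z; apply: injB; rewrite linr -!hB linr mL.
have pBR : forall a x y z, pBr z (a *: x + y) = a *: pBr z x + pBr z y.
  by move=> a x y z; apply: injB; rewrite linr -!hB linr mR.
have pBA : forall x y z, pBr x (pBr y z) = pBr (pBr x y) z.
  by move=> x y z; apply: injB; rewrite -!hB mA.
have pB1l : forall x, pBr f x = x by move=> x; apply: injB; rewrite -hB mE1.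
have pB1r : forall x, pBr x f = x by move=> x; apply: injB; rewrite -hB mE2.
pose pB (x y : 'cV[C]_m) := (map_mx Num.conj_op (pBr (cadj x) (cadj y)))^T.
have hpB : forall x y, cadj (pB x y) = pBr (cadj x) (cadj y).
  by move=> x y; rewrite /cadj /pB ccK.
pose uB := (map_mx Num.conj_op f)^T.
have huB : cadj uB = f by rewrite /cadj /uB ccK.
have qL : forall a x y z, pB (a *: x + y) z = a *: pB x z + pB y z.
  move=> a x y z; apply: cadj_inj.
  by rewrite cadjDZ !hpB cadjDZ pBL.
have qR : forall a x y z, pB z (a *: x + y) = a *: pB z x + pB z y.
  move=> a x y z; apply: cadj_inj.
  by rewrite cadjDZ !hpB cadjDZ pBR.
have qA : forall x y z, pB x (pB y z) = pB (pB x y) z.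
  by move=> x y z; apply: cadj_inj; rewrite !hpB pBA.
have q1l : forall x, pB uB x = x.
  by move=> x; apply: cadj_inj; rewrite hpB huB pB1l.
have q1r : forall x, pB x uB = x.
  by move=> x; apply: cadj_inj; rewrite hpB huB pB1r.
have uB0 : uB != 0.
  by apply: contraNneq f0 => h; rewrite -huB h cadj0.
have [B [vB [bB [dB hvB]]]] := FA_spec qL qR qA q1l q1r uB0.
have key : forall x z w w', mul (x *m w) (z *m w') = pA x z *m pBr w w'.
  move=> x z w w'.
  have k1 := keyK x w; have k2 := keyK z w'; have k3 := keyK' z w.
  by rewrite -k1 -k2 -mA [mul (e *m w) _]mA k3 -(keyK z w) -[mul (mul (z *m f) _) _]mA mA hA hB keyK.
exists A, B; split; first exact: dA.
split; first exact: dB.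
exists vA, vB; split; first exact: bA.
split; first exact: bB.
by move=> a c b d; rewrite hvA hvB hpB key.
Qed.
End Main.

Unset Implicit Arguments.
Theorem mainTheorem3 (C : numClosedFieldType) (n m : nat)
    (mul : 'M[C]_(n, m) -> 'M[C]_(n, m) -> 'M[C]_(n, m)) :
  ropp mul -> gen_schur mul.
Proof.
move=> [mL [mR [mA [[E [hE hEu]] mrk]]]].
have hE1 : (\rank E <= 1)%N by rewrite hE.
have [e [f hef]] := rank_le1P hE1.
have e0 : e != 0.
  by apply/eqP => h; move: hE; rewrite hef h mul0mx mxrank0.
have f0 : f != 0.
  by apply/eqP => h; move: hE; rewrite hef h mulmx0 mxrank0.
subst E.
apply: (@main_sec C n m mul mL mR mA e f _ _ mrk e0 f0).
- by move=> A; case: (hEu A).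
- by move=> A; case: (hEu A).
Qed.
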